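(* Let $x\in M_1$ be ap-chain recurrent. Then $\overline{[x]_{ap}}\subset M_0\cup[x]_{ap}$. In particular, if $\overline{[x]_{ap}}\subset M_1$ then $[x]_{ap}$ is closed.
   Context: Let $M\subset\mathbb{R}^d$ be closed (topology relative to $M$). Let $F:M\to M$ be continuous with $\sup_{x\in M}\|F(x)\|<\infty$. Let $d(x,y)=\max_i|x_i-y_i|$. Suppose $M=M_0\cup M_1$ (disjoint) with $M_0$ closed, $F(M_0)\subseteq M_0$ and $F(M_1)\subseteq M_1$. ap-chain recurrence. For $\delta>0$, an ap $\delta$-pseudoorbit joining $x$ to $y$ is a tuple $(\xi_0,\dots,\xi_n)\in M^{n+1}$, $n\ge1$, with: - $\xi_0=x$ and $\xi_n=y$; - $\xi_i\in M_0\Rightarrow\xi_{i+1}\in M_0$; - $d(\xi_{i+1},F(\xi_i))<\delta$ for all $i$. Write $x<_{ap}y$ if for every $\delta>0$ such a pseudoorbit exists, and $x\sim_{ap}y$ if $x<_{ap}y$ and $y<_{ap}x$. A point $x$ is ap-chain recurrent if $x\sim_{ap}x$. The set of such points is $\mathcal{R}_{ap}$. The ap-basic class $[x]_{ap}$ of $x\in\mathcal{R}_{ap}$ is its equivalence class under $\sim_{ap}$ restricted to $\mathcal{R}_{ap}$. *)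

(* Defs.v *)
From Stdlib Require Import Reals Lra.
From Stdlib Require Vectors.Fin.
Open Scope R_scope.

Definition Vec (d : nat) : Type := Fin.t d -> R.

Fixpoint vmax (d : nat) : (Fin.t d -> R) -> R :=
  match d return (Fin.t d -> R) -> R with
  | O => fun _ => 0
  | S n => fun f => Rmax (f Fin.F1) (vmax n (fun i => f (Fin.FS i)))
  end.

Definition vdist {d : nat} (x y : Vec d) : R := vmax d (fun i => Rabs (x i - y i)).

Definition zeroV (d : nat) : Vec d := fun _ => 0.

Definition closure {d : nat} (S : Vec d -> Prop) (y : Vec d) : Prop :=
  forall eps, 0 < eps -> exists z, S z /\ vdist y z < eps.

Definition is_closed {d : nat} (S : Vec d -> Prop) : Prop :=
  forall y, closure S y -> S y.

Definition rel_closed {d : nat} (M S : Vec d -> Prop) : Prop :=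
  forall y, M y -> closure S y -> S y.

Definition continuous_on {d : nat} (M : Vec d -> Prop) (F : Vec d -> Vec d) : Prop :=
  forall x, M x -> forall eps, 0 < eps -> exists delta, 0 < delta /\
    forall y, M y -> vdist x y < delta -> vdist (F x) (F y) < eps.

Definition ap_pseudoorbit {d : nat} (M M0 : Vec d -> Prop) (F : Vec d -> Vec d)
    (delta : R) (x y : Vec d) : Prop :=
  exists (n : nat) (xi : nat -> Vec d),
    (1 <= n)%nat /\ xi O = x /\ xi n = y /\
    (forall i, (i <= n)%nat -> M (xi i)) /\
    (forall i, (i < n)%nat -> M0 (xi i) -> M0 (xi (S i))) /\
    (forall i, (i < n)%nat -> vdist (xi (S i)) (F (xi i)) < delta).

Definition ap_lt {d : nat} (M M0 : Vec d -> Prop) (F : Vec d -> Vec d) (x y : Vec d) : Prop :=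
  forall delta, 0 < delta -> ap_pseudoorbit M M0 F delta x y.

Definition ap_equiv {d : nat} (M M0 : Vec d -> Prop) (F : Vec d -> Vec d) (x y : Vec d) : Prop :=
  ap_lt M M0 F x y /\ ap_lt M M0 F y x.

Definition ap_rec {d : nat} (M M0 : Vec d -> Prop) (F : Vec d -> Vec d) (x : Vec d) : Prop :=
  M x /\ ap_equiv M M0 F x x.

Definition ap_class {d : nat} (M M0 : Vec d -> Prop) (F : Vec d -> Vec d) (x y : Vec d) : Prop :=
  ap_rec M M0 F y /\ ap_equiv M M0 F x y.

(* Main.v *)
Require Import Defs.
From Stdlib Require Import Reals.
From Stdlib Require Import Lra Lia Arith Classical.
Open Scope R_scope.

Lemma vmax_le (n : nat) (f g : Fin.t n -> R) :
  (forall i, f i <= g i) -> vmax n f <= vmax n g.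
Proof.
  induction n; simpl; intros H; [lra|].
  pose proof (IHn (fun i => f (Fin.FS i)) (fun i => g (Fin.FS i)) (fun i => H (Fin.FS i))).
  pose proof (H Fin.F1).
  unfold Rmax; repeat destruct Rle_dec; lra.
Qed.

Lemma vmax_add (n : nat) (f g h : Fin.t n -> R) :
  (forall i, f i <= g i + h i) -> vmax n f <= vmax n g + vmax n h.
Proof.
  induction n; simpl; intros H; [lra|].
  pose proof (IHn (fun i => f (Fin.FS i)) (fun i => g (Fin.FS i)) (fun i => h (Fin.FS i))
     (fun i => H (Fin.FS i))).
  pose proof (H Fin.F1).
  unfold Rmax; repeat destruct Rle_dec; lra.
Qed.

Lemma vdist_tri {d} (a b c : Vec d) : vdist a c <= vdist a b + vdist b c.
Proof.
  unfold vdist; apply vmax_add; intro i.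
  replace (a i - c i) with ((a i - b i) + (b i - c i)) by ring.
  apply Rabs_triang.
Qed.

Lemma vdist_sym {d} (a b : Vec d) : vdist a b = vdist b a.
Proof.
  unfold vdist; apply Rle_antisym; apply vmax_le; intro i;
  rewrite Rabs_minus_sym; lra.
Qed.

Lemma concat {d} (M M0 : Vec d -> Prop) F delta a b c :
  ap_pseudoorbit M M0 F delta a b -> ap_pseudoorbit M M0 F delta b c ->
  ap_pseudoorbit M M0 F delta a c.
Proof.
  intros [n1 [x1 [H1 [H2 [H3 [H4 [H5 H6]]]]]]] [n2 [x2 [G1 [G2 [G3 [G4 [G5 G6]]]]]]].
  exists (n1 + n2)%nat, (fun i => if le_lt_dec i n1 then x1 i else x2 (i - n1)%nat).
  split; [|split; [|split; [|split; [|split]]]].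
  - lia.
  - destruct le_lt_dec; [assumption|lia].
  - destruct le_lt_dec; [|replace (n1+n2-n1)%nat with n2 by lia; assumption].
    assert (n2 = 0)%nat by lia. lia.
  - intros i Hi; destruct le_lt_dec; [apply H4; lia| apply G4; lia].
  - intros i Hi; destruct (le_lt_dec i n1); destruct (le_lt_dec (S i) n1).
    + apply H5; lia.
    + assert (i = n1) by lia; subst i. replace (S n1 - n1)%nat with 1%nat by lia.
      intro Hm. rewrite H3 in Hm. rewrite <- G2 in Hm. apply G5 in Hm; [|lia]. exact Hm.
    + lia.
    + replace (S i - n1)%nat with (S (i - n1)) by lia. apply G5; lia.
  - intros i Hi; destruct (le_lt_dec i n1); destruct (le_lt_dec (S i) n1).
    + apply H6; lia.
    + assert (i = n1) by lia; subst i. replace (S n1 - n1)%nat with 1%nat by lia.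
      rewrite H3, <- G2. apply G6; lia.
    + lia.
    + replace (S i - n1)%nat with (S (i - n1)) by lia. apply G6; lia.
Qed.

Lemma M0_prop {d} (M M0 : Vec d -> Prop) F delta a b :
  ap_pseudoorbit M M0 F delta a b -> M0 a -> M0 b.
Proof.
  intros [n [xi [H1 [H2 [H3 [H4 [H5 H6]]]]]]] Ha.
  assert (forall i, (i <= n)%nat -> M0 (xi i)).
  { induction i; intros Hi; [congruence|]. apply H5; [lia|]. apply IHi; lia. }
  rewrite <- H3; apply H; lia.
Qed.

Theorem mainTheorem3 (d : nat) (M M0 M1 : Vec d -> Prop) (F : Vec d -> Vec d)
  (HMclosed : is_closed M)
  (HFM : forall x, M x -> M (F x))
  (HFcont : continuous_on M F)
  (HFbdd : exists B, forall x, M x -> vdist (F x) (zeroV d) <= B)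
  (HM0M : forall x, M0 x -> M x)
  (HM1M : forall x, M1 x -> M x)
  (Hcover : forall x, M x -> M0 x \/ M1 x)
  (Hdisj : forall x, M0 x -> M1 x -> False)
  (HM0closed : rel_closed M M0)
  (HFM0 : forall x, M0 x -> M0 (F x))
  (HFM1 : forall x, M1 x -> M1 (F x))
  (x : Vec d) (Hx1 : M1 x) (Hxrec : ap_rec M M0 F x) :
  (forall y, closure (ap_class M M0 F x) y -> M0 y \/ ap_class M M0 F x y) /\
  ((forall y, closure (ap_class M M0 F x) y -> M1 y) -> is_closed (ap_class M M0 F x)).
Proof.
  assert (key : forall y, closure (ap_class M M0 F x) y -> ~ M0 y -> ap_class M M0 F x y).
  { intros y Hy Hn0.
    assert (My : M y).
    { apply HMclosed. intros eps He. destruct (Hy eps He) as [z [[[Mz _] _] Hz]].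
      exists z; split; assumption. }
    assert (Hxy : ap_lt M M0 F x y /\ ap_lt M M0 F y x).
    { split; intros delta Hd.
      - destruct (Hy (delta/2)) as [z [[_ [Hxz Hzx]] Hyz]]; [lra|].
        assert (Hz0 : ~ M0 z).
        { intro Hz. apply (Hdisj x); [|exact Hx1].
          apply (M0_prop M M0 F 1 z x); [apply Hzx; lra|exact Hz]. }
        destruct (Hxz (delta/2)) as [n [xi [H1 [H2 [H3 [H4 [H5 H6]]]]]]]; [lra|].
        exists n, (fun i => if Nat.eq_dec i n then y else xi i).
        split; [|split; [|split; [|split; [|split]]]].
        + assumption.
        + destruct Nat.eq_dec; [exfalso; lia|assumption].
        + destruct Nat.eq_dec; [reflexivity|exfalso; lia].
        + intros i Hi; destruct Nat.eq_dec; [assumption|apply H4; lia].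
        + intros i Hi; destruct (Nat.eq_dec i n); [lia|].
          destruct (Nat.eq_dec (S i) n).
          * intro Hm. exfalso. apply Hz0. rewrite <- H3, <- e. apply H5; assumption.
          * apply H5; assumption.
        + intros i Hi; destruct (Nat.eq_dec i n); [lia|].
          destruct (Nat.eq_dec (S i) n).
          * pose proof (H6 i Hi). rewrite e, H3 in H.
            pose proof (vdist_tri y z (F (xi i))). lra.
          * apply Rlt_trans with (delta/2); [apply H6; assumption|lra].
      - destruct (HFcont y My (delta/2)) as [dc [Hdc Hc]]; [lra|].
        destruct (Hy dc Hdc) as [z [[[Mz _] [_ Hzx]] Hyz]].
        destruct (Hzx (delta/2)) as [n [xi [H1 [H2 [H3 [H4 [H5 H6]]]]]]]; [lra|].
        exists n, (fun i => if Nat.eq_dec i 0 then y else xi i).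
        split; [|split; [|split; [|split; [|split]]]].
        + assumption.
        + destruct Nat.eq_dec; [reflexivity|exfalso; lia].
        + destruct Nat.eq_dec; [exfalso; lia|assumption].
        + intros i Hi; destruct Nat.eq_dec; [assumption|apply H4; lia].
        + intros i Hi; destruct (Nat.eq_dec i 0).
          * intro Hm; contradiction.
          * destruct (Nat.eq_dec (S i) 0); [lia|]. apply H5; assumption.
        + intros i Hi; destruct (Nat.eq_dec (S i) 0); [lia|].
          destruct (Nat.eq_dec i 0).
          * subst i. pose proof (H6 0%nat Hi). rewrite H2 in H.
            pose proof (Hc z Mz Hyz). rewrite vdist_sym in H0.
            pose proof (vdist_tri (xi 1%nat) (F z) (F y)). lra.
          * apply Rlt_trans with (delta/2); [apply H6; assumption|lra]. }
    destruct Hxy as [Hxy Hyx].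
    split; [split; [exact My|split]|split; assumption];
      intros delta Hd; apply concat with x; auto. }
  split.
  - intros y Hy. destruct (classic (M0 y)) as [H|H]; [left; exact H|right; apply key; assumption].
  - intros H1 y Hy. apply key; [exact Hy|]. intro H0. exact (Hdisj y H0 (H1 y Hy)).
Qed.
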